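(* Let $\alpha>0$, $M,\tilde M>0$ with $M/\tilde M\ge(1-5^{-\alpha})^{-1}\bigl(1+\frac{1}{5^\alpha-3^\alpha}\bigr)80^\alpha$, and let $n\ge1$. With the construction below, for every $\mathcal Z_{\boldsymbol\kappa_{\bar a},\bar a}\in\mathcal U_{\bar a}$, the function $y=y_{\mathcal C}(\cdot\mid\boldsymbol\kappa_{\bar a},\bar a)$ has unique maximizer $\mathbf{x}^*=\mathbf{c}_{\boldsymbol\kappa_{\bar a},\bar a}$ on $[0,1]^d$ and satisfies $\tilde M\|\mathbf{x}^*-\mathbf{x}\|_\infty^\alpha\le|y(\mathbf{x}^* )-y(\mathbf{x})|\le M\|\mathbf{x}^*-\mathbf{x}\|_\infty^\alpha$ for all $\mathbf{x}\in[0,1]^d$.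
   Context: $\|\mathbf{x}\|_\infty=\max_l|x_l|$. Let $\Delta=\lfloor3^d/2\rfloor$, $\bar a=\lceil4(n+1)/\Delta\rceil+2$, $\gamma_a=5^{-a}/2$, $\hat M=\frac{40^\alpha}{5^\alpha-3^\alpha}\tilde M$. For $a=0,\dots,\bar a$ and $\boldsymbol\kappa_a\in\{1,\dots,5^a\}^d$ let $\mathbf{c}_{\boldsymbol\kappa_a,a}=((2\kappa_{1,a}-1)\gamma_a,\dots,(2\kappa_{d,a}-1)\gamma_a)$ and $\mathcal Z_{\boldsymbol\kappa_a,a}=\{\mathbf{x}\in[0,1]^d:\|\mathbf{x}-\mathbf{c}_{\boldsymbol\kappa_a,a}\|_\infty<\gamma_a\}$. For $a\ge1$, $\mathcal P(\boldsymbol\kappa_a)$ is the level-$(a-1)$ index with $\mathcal Z_{\boldsymbol\kappa_a,a}\subset\mathcal Z_{\mathcal P(\boldsymbol\kappa_a),a-1}$, $\mathcal P^\ell$ its iterate. $\mathcal U_0=\{\mathcal Z_{\mathbf 1,0}\}$; for $a\ge1$, $\mathcal U_a=\{\mathcal Z_{\boldsymbol\kappa_a,a}:\mathcal Z_{\mathcal P(\boldsymbol\kappa_a),a-1}\in\mathcal U_{a-1},\ \|\mathbf{c}_{\boldsymbol\kappa_a,a}-\mathbf{c}_{\mathcal P(\boldsymbol\kappa_a),a-1}\|_\infty\le2\gamma_a\}$. Components on $[0,1]^d$: $y_{\mathcal S}(\mathbf{x}\mid\mathbf 1,0)=\hat M(5^\alpha-3^\alpha)\gamma_1^\alpha$ if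 $\|\mathbf{x}-\mathbf{c}_{\mathbf 1,0}\|_\infty\le3\gamma_1$, $=\hat M5^\alpha\gamma_1^\alpha-\hat M\|\mathbf{x}-\mathbf{c}_{\mathbf 1,0}\|_\infty^\alpha$ if $3\gamma_1\le\|\mathbf{x}-\mathbf{c}_{\mathbf 1,0}\|_\infty\le5\gamma_1$; for $1\le a\le\bar a-1$, $y_{\mathcal S}(\mathbf{x}\mid\boldsymbol\kappa_a,a)=\hat M(5^\alpha-3^\alpha)\gamma_{a+1}^\alpha$ if $\|\mathbf{x}-\mathbf{c}_{\boldsymbol\kappa_a,a}\|_\infty\le3\gamma_{a+1}$, $=\hat M5^\alpha\gamma_{a+1}^\alpha-\hat M\|\mathbf{x}-\mathbf{c}_{\boldsymbol\kappa_a,a}\|_\infty^\alpha$ if $3\gamma_{a+1}<\|\cdot\|_\infty\le5\gamma_{a+1}$, $=0$ otherwise; $y_{\mathcal D}(\mathbf{x}\mid\boldsymbol\kappa_{\bar a},\bar a)=\hat M\gamma_{\bar a}^\alpha-\hat M\|\mathbf{x}-\mathbf{c}_{\boldsymbol\kappa_{\bar a},\bar a}\|_\infty^\alpha$ if $\|\mathbf{x}-\mathbf{c}_{\boldsymbol\kappa_{\bar a},\bar a}\|_\infty\le\gamma_{\bar a}$, $=0$ otherwise. $y_{\mathcal C}(\mathbf{x}\mid\boldsymbol\kappa_{\bar a},\bar a)=y_{\mathcal D}(\mathbf{x}\mid\boldsymbol\kappa_{\bar a},\bar a)+\sum_{\ell=1}^{\bar a-1}y_{\mathcal S}(\mathbf{x}\mid\mathcal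 P^\ell(\boldsymbol\kappa_{\bar a}),\bar a-\ell)+y_{\mathcal S}(\mathbf{x}\mid\mathbf 1,0)$. *)

(* Defs.v *)
From HB Require Import structures.
From mathcomp Require Import all_boot all_order all_algebra.
From mathcomp Require Import all_classical all_reals all_analysis.
Set Implicit Arguments. Unset Strict Implicit. Unset Printing Implicit Defensive.
Import Order.TTheory GRing.Theory Num.Theory.
Local Open Scope ring_scope.

Section Construction.
Variables (R : realType) (d : nat) (alpha Mt : R).

Definition gam (a : nat) : R := (5%:R ^- a) / 2.

Definition linf (x : 'rV[R]_d) : R := \big[Num.max/0]_(i < d) `|x ord0 i|.

Definition in_cube (x : 'rV[R]_d) : Prop := forall i : 'I_d, 0 <= x ord0 i <= 1.

Definition ctr (k : 'I_d -> nat) (a : nat) : 'rV[R]_d :=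
  \row_i ((2 * (k i)%:R - 1) * gam a).

Definition ones : 'I_d -> nat := fun _ => 1%N.

(* parent index P(kappa): the level-(a-1) cell containing cell kappa,
   i.e. componentwise ceil(kappa_i / 5) *)
Definition parent (k : 'I_d -> nat) : 'I_d -> nat := fun i => ((k i + 4) %/ 5)%N.

Fixpoint inU (a : nat) (k : 'I_d -> nat) : bool :=
  match a with
  | 0 => [forall i, k i == 1%N]
  | a'.+1 => [forall i, (1 <= k i <= 5 ^ a'.+1)%N] && inU a' (parent k)
             && (linf (ctr k a'.+1 - ctr (parent k) a') <= 2 * gam a'.+1)
  end.

Definition Mhat : R := 40 `^ alpha / (5 `^ alpha - 3 `^ alpha) * Mt.

(* y_S(x | 1, 0) (both branches as in the paper; on [0,1]^d the distance is <= 5 gamma_1) *)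
Definition yS0 (x : 'rV[R]_d) : R :=
  let r := linf (x - ctr ones 0) in
  if r <= 3 * gam 1 then Mhat * (5 `^ alpha - 3 `^ alpha) * gam 1 `^ alpha
  else Mhat * 5 `^ alpha * gam 1 `^ alpha - Mhat * r `^ alpha.

Definition yS (k : 'I_d -> nat) (a : nat) (x : 'rV[R]_d) : R :=
  let r := linf (x - ctr k a) in
  if r <= 3 * gam a.+1 then Mhat * (5 `^ alpha - 3 `^ alpha) * gam a.+1 `^ alpha
  else if r <= 5 * gam a.+1 then Mhat * 5 `^ alpha * gam a.+1 `^ alpha - Mhat * r `^ alpha
  else 0.

Definition yD (k : 'I_d -> nat) (a : nat) (x : 'rV[R]_d) : R :=
  let r := linf (x - ctr k a) in
  if r <= gam a then Mhat * gam a `^ alpha - Mhat * r `^ alpha else 0.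

Definition yC (k : 'I_d -> nat) (a : nat) (x : 'rV[R]_d) : R :=
  yD k a x + \sum_(1 <= l < a) yS (iter l parent k) (a - l) x + yS0 x.

End Construction.

(* Delta = floor(3^d / 2);  abar = ceil(4(n+1)/Delta) + 2  (ceil via nat division) *)
Definition Delta (d : nat) : nat := (3 ^ d)./2.
Definition abar (d n : nat) : nat :=
  ((4 * (n + 1) + Delta d - 1) %/ Delta d + 2)%N.

(* Main.v *)
Require Import Defs.
From HB Require Import structures.
From mathcomp Require Import all_boot all_order all_algebra.
From mathcomp Require Import all_classical all_reals all_analysis.
From mathcomp Require Import ring lra.
Import Order.TTheory GRing.Theory Num.Theory.
Local Open Scope ring_scope.

Section Linf.
Variables (R : realType) (d : nat).
Implicit Types x y : 'rV[R]_d.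

Lemma linf_ge0 x : 0 <= linf x.
Proof.
rewrite /linf; elim/big_ind: _ => //= a b Ha Hb.
by rewrite le_max Ha.
Qed.

Lemma linf_le x c : 0 <= c -> (forall i, `|x ord0 i| <= c) -> linf x <= c.
Proof. by move=> c0 H; rewrite /linf; apply: bigmax_le. Qed.

Lemma linf_ge x i : `|x ord0 i| <= linf x.
Proof. by rewrite /linf (bigD1 i) //= le_max lexx. Qed.

Lemma linf_triangle x y : linf (x + y) <= linf x + linf y.
Proof.
apply: linf_le; first by rewrite addr_ge0 ?linf_ge0.
move=> i; rewrite mxE; apply: (le_trans (ler_normD _ _)).
by rewrite lerD ?linf_ge.
Qed.

Lemma linf_sym x y : linf (x - y) = linf (y - x).
Proof.
apply/le_anti/andP; split; apply: linf_le; rewrite ?linf_ge0// => i;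
  apply: le_trans (linf_ge _ i); rewrite !mxE distrC //.
Qed.

Lemma linf0 : linf (0 : 'rV[R]_d) = 0.
Proof.
apply/le_anti/andP; split; last exact: linf_ge0.
by apply: linf_le => // i; rewrite mxE normr0.
Qed.

Lemma linf_tri3 x y z : linf (x - z) <= linf (x - y) + linf (y - z).
Proof.
have -> : x - z = (x - y) + (y - z) by rewrite addrA subrK.
exact: linf_triangle.
Qed.

End Linf.

Section Num.
Variables (R : realType) (alpha Mt : R).
Hypotheses (ha : 0 < alpha) (hMt : 0 < Mt).

Lemma gam_gt0 a : 0 < gam R a.
Proof. by rewrite /gam divr_gt0 // invr_gt0 exprn_gt0. Qed.

Lemma gamS a : gam R a.+1 = gam R a / 5.
Proof. rewrite /gam exprS invfM; ring. Qed.

Lemma gam0 : gam R 0 = 1/2.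
Proof. by rewrite /gam expr0 invr1. Qed.

Lemma powR_le (x y : R) : 0 <= x -> x <= y -> x `^ alpha <= y `^ alpha.
Proof.
move=> x0 xy; apply: (ge0_ler_powR (ltW ha)) => //; rewrite nnegrE //.
exact: le_trans xy.
Qed.

Lemma powR_lt (x y : R) : 0 <= x -> x < y -> x `^ alpha < y `^ alpha.
Proof.
move=> x0 xy; apply: (gt0_ltr_powR ha) => //; rewrite nnegrE //.
exact: le_trans (ltW xy).
Qed.

Lemma p35 : 3 `^ alpha < 5 `^ alpha :> R.
Proof. by apply: powR_lt; lra. Qed.

Lemma p1lt5 : 1 < 5 `^ alpha :> R.
Proof. have := @powR_lt 1 5; rewrite powR1; apply; lra. Qed.

Lemma p1le (c : R) : 1 <= c -> 1 <= c `^ alpha.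
Proof. by move=> c1; have := @powR_le 1 c; rewrite powR1; apply. Qed.

Lemma Mhat_gt0 : 0 < Mhat alpha Mt.
Proof.
rewrite /Mhat mulr_gt0 // divr_gt0 ?powR_gt0 //.
by rewrite subr_gt0 p35.
Qed.

Lemma MhatP : Mhat alpha Mt * (5 `^ alpha - 3 `^ alpha) = 40 `^ alpha * Mt.
Proof.
have D : 5 `^ alpha - 3 `^ alpha != 0 :> R by rewrite subr_eq0 gt_eqF // p35.
by rewrite /Mhat; field.
Qed.

Lemma Mhat_ge8 : Mt * 8 `^ alpha <= Mhat alpha Mt.
Proof.
have D : 0 < 5 `^ alpha - 3 `^ alpha :> R by rewrite subr_gt0 p35.
have p50 : 0 < 5 `^ alpha :> R by rewrite powR_gt0.
have -> : Mhat alpha Mt = 40 `^ alpha * Mt / (5 `^ alpha - 3 `^ alpha).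
  by rewrite -MhatP mulrK // unitfE gt_eqF.
have -> : 40 `^ alpha = 8 `^ alpha * 5 `^ alpha :> R.
  by rewrite -powRM // -natrM.
rewrite ler_pdivlMr //.
have hD : 5 `^ alpha - 3 `^ alpha <= 5 `^ alpha :> R by rewrite lerBlDr lerDl powR_ge0.
have := mulr_ge0 (ltW hMt) (powR_ge0 8 alpha); nra.
Qed.

Definition PP (g : R) := Mhat alpha Mt * (5 `^ alpha - 3 `^ alpha) * g `^ alpha.

Lemma PP_ge0 g : 0 <= PP g.
Proof. by rewrite /PP MhatP mulr_ge0 ?mulr_ge0 ?powR_ge0 // ltW. Qed.

Lemma pow3 (g : R) : 0 <= g -> (3 * g) `^ alpha = 3 `^ alpha * g `^ alpha.
Proof. by move=> g0; rewrite powRM. Qed.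
Lemma pow5 (g : R) : 0 <= g -> (5 * g) `^ alpha = 5 `^ alpha * g `^ alpha.
Proof. by move=> g0; rewrite powRM. Qed.

Lemma yS_props d (k : 'I_d -> nat) a x :
  let s := linf (x - ctr R k a) in let g := gam R a.+1 in
  [/\ yS alpha Mt k a x <= PP g, 0 <= yS alpha Mt k a x,
      (s <= 3 * g -> yS alpha Mt k a x = PP g) &
      (5 * g <= s -> yS alpha Mt k a x = 0)].
Proof.
move=> s g; have g0 : 0 < g by apply: gam_gt0.
have g0' := ltW g0.
have Mh := Mhat_gt0.
rewrite /yS -/s -/g /PP.
case: ifPn => [s3|]; first by split => //; [rewrite PP_ge0 | move=> s5; lra].
rewrite -ltNge => s3.
case: ifPn => [s5|]; last first.
  by rewrite -ltNge => s5; split => //; apply: PP_ge0.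
have h3 : (3 * g) `^ alpha < s `^ alpha by apply: powR_lt; rewrite ?mulr_ge0 // ltW.
have h5 : s `^ alpha <= (5 * g) `^ alpha.
  by apply: powR_le => //; apply: le_trans (ltW s3); rewrite mulr_ge0 // ltW.
rewrite pow3 // in h3; rewrite pow5 // in h5.
split.
- move: h3; rewrite -subr_gt0 => h3; have := mulr_gt0 Mh h3; nra.
- move: h5; rewrite -subr_ge0 => h5; have := mulr_ge0 (ltW Mh) h5; nra.
- by [].
- move=> s5'; have -> : s = 5 * g by apply/le_anti; rewrite s5 s5'.
  by rewrite pow5 // mulrA subrr.
Qed.

Lemma yS0_props d x :
  let s := linf (x - ctr R (@ones d) 0) in let g := gam R 1 in
  [/\ yS0 alpha Mt x <= PP g, (s <= 5 * g -> 0 <= yS0 alpha Mt x),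
      (s <= 3 * g -> yS0 alpha Mt x = PP g) &
      (5 * g <= s -> yS0 alpha Mt x <= 0)].
Proof.
move=> s g; have g0 : 0 < g by apply: gam_gt0.
have g0' := ltW g0.
have Mh := Mhat_gt0.
have s0 : 0 <= s by apply: linf_ge0.
rewrite /yS0 -/s -/g /PP.
case: ifPn => [s3|]; first by split => //; [move=> _; apply: PP_ge0 | move=> s5; lra].
rewrite -ltNge => s3.
have h3 : (3 * g) `^ alpha < s `^ alpha by apply: powR_lt; rewrite ?mulr_ge0 // ltW.
rewrite pow3 // in h3.
split.
- nra.
- move=> s5; have h5 : s `^ alpha <= (5 * g) `^ alpha by apply: powR_le.
  rewrite pow5 // in h5; nra.
- by [].
- move=> s5; have h5 : (5 * g) `^ alpha <= s `^ alpha.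
    by apply: powR_le => //; rewrite mulr_ge0 // ltW.
  rewrite pow5 // in h5; nra.
Qed.

End Num.

Section Chain.
Variables (R : realType) (d : nat) (alpha Mt : R) (A : nat) (k : 'I_d -> nat).
Hypotheses (ha : 0 < alpha) (hMt : 0 < Mt) (hA : (1 <= A)%N) (hU : inU R A k).

Definition kk j := iter (A - j) (@parent d) k.
Definition cc j := ctr R (kk j) j.
Definition TT j (x : 'rV[R]_d) :=
  if j == 0%N then yS0 alpha Mt x else yS alpha Mt (kk j) j x.

Lemma inU_iter m j : (j + m = A)%N -> inU R j (iter m (@parent d) k).
Proof.
elim: m j => [|m IH] j; first by rewrite addn0 => ->.
move=> e; have e' : (j.+1 + m = A)%N by rewrite addSnnS.
have := IH _ e'.
by rewrite /= => /andP[/andP[_ ->] _].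
Qed.

Lemma step_dist j : (j < A)%N -> linf (cc j.+1 - cc j) <= 2 * gam R j.+1.
Proof.
move=> hj; have := inU_iter (A - j.+1) j.+1 (subnKC hj).
rewrite /= => /andP[_ H]; move: H.
by rewrite /cc /kk -(subnSK hj).
Qed.

Lemma Dbound_aux m : (m <= A)%N ->
  linf (cc A - cc (A - m)) <= 5/2 * gam R (A - m).+1.
Proof.
elim: m => [|m IH] hm.
  rewrite subn0 subrr linf0; apply: mulr_ge0; [lra | exact: ltW (gam_gt0 _ _)].
have hj : (A - m.+1 < A)%N by rewrite ltn_subrL; apply/andP; split => //; apply: leq_trans hA.
have e : (A - m.+1).+1 = (A - m)%N by rewrite subnSK.
apply: le_trans (linf_tri3 _ _ _ (cc (A - m)) _) _.
have := IH (ltnW hm); have := step_dist _ hj; rewrite e.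
rewrite (gamS R (A - m)) -e (gamS R (A - m.+1)).
have := gam_gt0 R (A - m.+1); lra.
Qed.

Lemma Dbound j : (j <= A)%N -> linf (cc A - cc j) <= 5/2 * gam R j.+1.
Proof.
move=> hj; have := Dbound_aux _ (leq_subr j A); by rewrite subKn.
Qed.

Lemma cA : cc A = ctr R k A.
Proof. by rewrite /cc /kk subnn. Qed.

Lemma c0 : cc 0 = ctr R (@ones d) 0.
Proof.
have := inU_iter A 0 (add0n A); rewrite /= => /forallP H.
apply/rowP => i; rewrite !mxE /kk subn0; by rewrite (eqP (H i)).
Qed.

Lemma cube_c0 x : in_cube x -> linf (x - ctr R (@ones d) 0) <= 5 * gam R 1.
Proof.
move=> hx; rewrite (gamS R 0) gam0; apply: linf_le; first lra.
move=> i; rewrite !mxE /ones gam0; have := hx i; move=> /andP[h0 h1].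
rewrite ler_norml; apply/andP; split; lra.
Qed.

Lemma TT_props j x : (j < A)%N ->
  let s := linf (x - cc j) in let g := gam R j.+1 in
  [/\ TT j x <= PP R alpha Mt g, (in_cube x -> 0 <= TT j x),
      (s <= 3 * g -> TT j x = PP R alpha Mt g) &
      (5 * g <= s -> TT j x <= 0)].
Proof.
move=> hj s g; rewrite /TT /s /g; case: eqP => [->|j0].
  rewrite c0; have [h1 h2 h3 h4] := yS0_props _ _ _ ha hMt _ x; split => //.
  by move=> hx; apply: h2; apply: cube_c0.
have [h1 h2 h3 h4] := yS_props _ _ _ ha hMt _ (kk j) j x; split => //.
by move=> H; rewrite h4.
Qed.

Lemma yC_split x :
  yC alpha Mt k A x = yD alpha Mt k A x + \sum_(0 <= j < A) TT j x.
Proof.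
have E : \sum_(1 <= l < A) yS alpha Mt (iter l (@parent d) k) (A - l) x
       = \sum_(1 <= j < A) TT j x.
  rewrite [RHS]big_nat_rev /=; apply: eq_big_nat => l /andP[l1 lA].
  rewrite add1n subSS /TT.
  have -> : (A - l == 0)%N = false by apply/negbTE; rewrite -lt0n subn_gt0.
  by rewrite /kk subKn // ltnW.
rewrite /yC E (big_ltn hA) /TT /=; lra.
Qed.

End Chain.

Section Geo.
Variables (R : realType) (alpha : R).
Hypothesis ha : 0 < alpha.

Definition rho : R := (5 `^ alpha)^-1.

Lemma rho_props : 0 < rho /\ rho < 1.
Proof.
have h := p1lt5 _ _ ha; rewrite /rho; split; first by rewrite invr_gt0; lra.
by rewrite invf_lt1 //; lra.
Qed.

Lemma pow_gamS a : (gam R a.+1) `^ alpha = rho * (gam R a) `^ alpha.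
Proof.
have g0 := ltW (gam_gt0 R a).
rewrite gamS powRM ?invr_ge0 //.
have h : 5 `^ alpha * (5^-1) `^ alpha = 1 :> R.
  by rewrite -powRM ?invr_ge0 // mulfV // powR1.
have p5 : 5 `^ alpha != 0 :> R by rewrite gt_eqF // powR_gt0.
rewrite /rho mulrC; congr (_ * _).
by apply: (mulfI p5); rewrite h mulfV.
Qed.

Definition HH (q : R) j := if gam R j.+1 < q then (gam R j.+1) `^ alpha else 0.

Lemma geo q t : forall s, 0 < q ->
  \sum_(s <= j < s + t) HH q j <= (gam R s.+1) `^ alpha / (1 - rho) /\
  \sum_(s <= j < s + t) HH q j <= q `^ alpha / (1 - rho).
Proof.
have [r0 r1] := rho_props.
have e0 : 0 < 1 - rho by lra.
elim: t => [|t IH] s q0.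
  rewrite addn0 big_geq //; split; apply: divr_ge0; rewrite ?powR_ge0 //; lra.
rewrite (@big_ltn _ _ _ s) ?addnS ?ltnS ?leq_addr // -addSn.
have [h1 h2] := IH s.+1 q0.
rewrite pow_gamS in h1.
set S := \sum_(_ <= _ < _) _ in h1 h2 *.
have G0 : 0 <= (gam R s.+1) `^ alpha by apply: powR_ge0.
have Q0 : 0 <= q `^ alpha by apply: powR_ge0.
rewrite /HH; case: ifPn => hq.
  have hq' : (gam R s.+1) `^ alpha <= q `^ alpha.
    by apply: powR_le => //; [exact: ltW (gam_gt0 _ _) | exact: ltW].
  have E : (gam R s.+1) `^ alpha + rho * (gam R s.+1) `^ alpha / (1 - rho)
         = (gam R s.+1) `^ alpha / (1 - rho).
    by field; lra.
  split; first by rewrite -E lerD2l.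
  apply: le_trans (_ : (gam R s.+1) `^ alpha / (1 - rho) <= _); last first.
    by rewrite ler_pM2r ?invr_gt0.
  by rewrite -E lerD2l.
rewrite add0r; split => //.
apply: le_trans h1 _; rewrite ler_pM2r ?invr_gt0 //.
have : 0 <= rho * (gam R s.+1) `^ alpha by rewrite mulr_ge0 // ltW.
nra.
Qed.

End Geo.

Section Main.
Variables (R : realType) (d : nat) (alpha Mt : R) (A : nat) (k : 'I_d -> nat).
Hypotheses (ha : 0 < alpha) (hMt : 0 < Mt) (hA : (0 < A)%N) (hU : inU R A k).

Local Notation T := (TT R d alpha Mt A k).
Local Notation xs := (ctr R k A).
Local Notation c := (cc R d A k).

Lemma Dxs j : (j <= A)%N -> linf (xs - c j) <= 5/2 * gam R j.+1.
Proof. by move=> hj; rewrite -(cA R d A k); apply: Dbound. Qed.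

Lemma Txs j : (j < A)%N -> T j xs = PP R alpha Mt (gam R j.+1).
Proof.
move=> hj; have [_ _ h3 _] := TT_props _ _ _ _ _ _ ha hMt hU _ xs hj.
apply: h3; apply: le_trans (Dxs _ (ltnW hj)) _.
have := gam_gt0 R j.+1; lra.
Qed.

Lemma PPE g : PP R alpha Mt g = 40 `^ alpha * Mt * g `^ alpha.
Proof. by rewrite /PP MhatP. Qed.

Lemma drop_up j x : (j < A)%N -> in_cube x ->
  0 <= T j xs - T j x <= 40 `^ alpha * Mt * HH R alpha (2 * linf (xs - x)) j.
Proof.
move=> hj hx; have [h1 h2 h3 _] := TT_props _ _ _ _ _ _ ha hMt hU _ x hj.
rewrite (Txs _ hj) subr_ge0 h1 /=.
have g0 := gam_gt0 R j.+1.
have K0 : 0 <= 40 `^ alpha * Mt by rewrite mulr_ge0 ?powR_ge0 // ltW.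
case: (lerP (linf (x - c j)) (3 * gam R j.+1)) => hs.
  rewrite h3 // subrr /HH; case: ifP => _ //; rewrite mulr_ge0 ?powR_ge0 //.
have hr : gam R j.+1 < 2 * linf (xs - x).
  have := linf_tri3 _ _ x xs (c j); rewrite (linf_sym _ _ x xs).
  have := Dxs _ (ltnW hj); lra.
rewrite /HH hr -PPE; have := h2 hx; lra.
Qed.

Lemma drop_low j x : (j < A)%N -> 15/2 * gam R j.+1 <= linf (xs - x) ->
  PP R alpha Mt (gam R j.+1) <= T j xs - T j x.
Proof.
move=> hj hr; have [_ _ _ h4] := TT_props _ _ _ _ _ _ ha hMt hU _ x hj.
rewrite (Txs _ hj); suff : T j x <= 0 by lra.
apply: h4.
have := linf_tri3 _ _ xs (c j) x; rewrite (linf_sym _ _ (c j) x).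
have := Dxs _ (ltnW hj); lra.
Qed.

Lemma yD_xs : yD alpha Mt k A xs = Mhat alpha Mt * gam R A `^ alpha.
Proof.
rewrite /yD subrr linf0 ifT; last exact: ltW (gam_gt0 _ _).
by rewrite powR0 ?gt_eqF // mulr0 subr0.
Qed.

Lemma yD_drop x :
  (linf (xs - x) <= gam R A ->
     yD alpha Mt k A xs - yD alpha Mt k A x = Mhat alpha Mt * linf (xs - x) `^ alpha) /\
  (gam R A < linf (xs - x) ->
     yD alpha Mt k A xs - yD alpha Mt k A x = Mhat alpha Mt * gam R A `^ alpha).
Proof.
rewrite yD_xs /yD (linf_sym _ _ x xs); split => h.
  by rewrite ifT //; ring.
by rewrite ifF ?subr0 //; apply/negbTE; rewrite -ltNge.
Qed.

Lemma sum_ge_one (F : nat -> R) a : (a < A)%N -> (forall j, (j < A)%N -> 0 <= F j) ->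
  F a <= \sum_(0 <= j < A) F j.
Proof.
move=> haA hF; rewrite big_mkord (bigD1 (Ordinal haA)) //= lerDl.
by apply: sumr_ge0 => i _; apply: hF.
Qed.

Lemma find_level (r : R) m : r < 15/2 * gam R 0 -> 15/2 * gam R m <= r ->
  exists a, (a < m)%N /\ 15/2 * gam R a.+1 <= r < 15/2 * gam R a.
Proof.
elim: m => [|m IH] h0 hm; first by lra.
case: (ltP r (15/2 * gam R m)) => h.
  by exists m; rewrite ltnSn h hm.
have [a [ham H]] := IH h0 h; exists a; split => //; exact: ltn_trans ham _.
Qed.

End Main.

Lemma linf_eq0 (R : realType) d (x y : 'rV[R]_d) : linf (x - y) = 0 -> y = x.
Proof.
move=> h; apply/rowP => i; have := linf_ge _ _ (x - y) i; rewrite h !mxE.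
by rewrite normr_le0 subr_eq0 => /eqP ->.
Qed.

Lemma cube_xs (R : realType) d (k : 'I_d -> nat) A : (0 < A)%N -> inU R A k ->
  in_cube (ctr R k A).
Proof.
move=> hA hU.
have H : forall i, (0 < k i <= 5 ^ A)%N.
  move: hU; case: A hA => // A' _ /= /andP[/andP[/forallP H' _] _] i; exact: H' i.
move=> i; rewrite mxE; have /andP[k1 k5] := H i.
have K1 : 1 <= (k i)%:R :> R by rewrite ler1n.
have K5 : (k i)%:R <= 5%:R ^+ A :> R by rewrite -natrX ler_nat.
rewrite /gam; set F := 5%:R ^+ A in K5 *.
have F0 : 0 < F by rewrite exprn_gt0.
have Fi : 0 < F^-1 by rewrite invr_gt0.
have FF : F^-1 * F = 1 by rewrite mulVf // gt_eqF.
have K5' : 0 <= F - (k i)%:R by rewrite subr_ge0.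
have h := mulr_ge0 (ltW Fi) K5'; apply/andP; split.
  apply: mulr_ge0; [lra | apply: divr_ge0; [exact: ltW | lra]].
rewrite mulrA ler_pdivrMr //.
have -> : (2 * (k i)%:R - 1) * F^-1 = 2 * (F^-1 * (k i)%:R) - F^-1 by ring.
have : F^-1 * (k i)%:R <= F^-1 * F by rewrite ler_pM2l.
rewrite FF.
lra.
Qed.

Lemma main_bounds (R : realType) d (alpha M Mt : R) A (k : 'I_d -> nat) x :
  0 < alpha -> 0 < Mt -> (0 < A)%N -> inU R A k ->
  (1 - 5 `^ (- alpha))^-1 * (1 + (5 `^ alpha - 3 `^ alpha)^-1) * 80 `^ alpha <= M / Mt ->
  in_cube x -> 0 < linf (ctr R k A - x) ->
  Mt * linf (ctr R k A - x) `^ alpha <= yC alpha Mt k A (ctr R k A) - yC alpha Mt k A x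
  <= M * linf (ctr R k A - x) `^ alpha.
Proof.
move=> ha hMt hA hU hMM hx r0.
set xs := ctr R k A; set r := linf (xs - x).
have hxs := cube_xs _ _ _ _ hA hU.
set T := TT R d alpha Mt A k.
have Edrop : yC alpha Mt k A xs - yC alpha Mt k A x =
   (yD alpha Mt k A xs - yD alpha Mt k A x) + \sum_(0 <= j < A) (T j xs - T j x).
  by rewrite !(yC_split _ _ _ _ _ _ hA) sumrB opprD addrACA.
rewrite {}Edrop.
set DD := yD _ _ _ _ _ - _; set SS := \sum_(_ <= _ < _) _.
have [hD1 hD2] := yD_drop R d alpha Mt A k ha x.
rewrite -/xs -/r -/DD in hD1 hD2.
have Mh := Mhat_gt0 R alpha Mt ha hMt.
have M8 := Mhat_ge8 R alpha Mt ha hMt.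
have gA := gam_gt0 R A.
have u0 : 0 < r `^ alpha by rewrite powR_gt0.
have p8 : 1 <= 8 `^ alpha :> R by apply: p1le => //; lra.
have r1 : r <= 1.
  apply: linf_le; first lra.
  move=> i; rewrite !mxE; have := hx i; have := hxs i; rewrite !mxE.
  move=> /andP[a0 a1] /andP[b0 b1]; rewrite ler_norml; apply/andP; split; lra.
have S0 : 0 <= SS.
  rewrite /SS big_mkord; apply: sumr_ge0 => i _.
  by have /andP[] := drop_up _ _ _ _ _ _ ha hMt hA hU _ x (ltn_ord i) hx.
have D0 : 0 <= DD.
  case: (lerP r (gam R A)) => h; [rewrite hD1 // | rewrite hD2 //];
    by rewrite mulr_ge0 ?powR_ge0 // ltW.
apply/andP; split.
  case: (lerP r (15/2 * gam R A)) => hr.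
    case: (lerP r (gam R A)) => h.
      rewrite hD1 //; suff : Mt * r `^ alpha <= Mhat alpha Mt * r `^ alpha by lra.
      rewrite ler_pM2r //; apply: le_trans M8; exact: ler_peMr (ltW hMt) p8.
    rewrite hD2 //; suff : Mt * r `^ alpha <= Mhat alpha Mt * gam R A `^ alpha by lra.
    apply: le_trans (_ : Mt * (8 `^ alpha * gam R A `^ alpha) <= _); last first.
      by rewrite mulrA ler_pM2r ?powR_gt0.
    rewrite -powRM ?ler_pM2l //; try lra.
    by apply: (powR_le _ _ ha); [exact: ltW | lra].
  have h0 : r < 15/2 * gam R 0 by rewrite gam0; lra.
  have [a [haA /andP[ha1 ha2]]] := find_level _ _ _ h0 (ltW hr).
  have := drop_low _ _ _ _ _ _ ha hMt hA hU _ x haA ha1.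
  have := @sum_ge_one R A (fun j => T j xs - T j x) a haA.
  move=> /(_ (fun j hj => proj1 (andP (drop_up _ _ _ _ _ _ ha hMt hA hU _ x hj hx)))) /= hs hl.
  rewrite -/T -/xs in hl; rewrite -/SS in hs.
  suff H : Mt * r `^ alpha <= PP R alpha Mt (gam R a.+1).
    by apply: le_trans H _; apply: le_trans hl _; apply: le_trans hs _; exact: ler_wpDl D0 (lexx _).
  rewrite PPE // (mulrC (40 `^ alpha) Mt) -mulrA ler_pM2l // -powRM; last first.
  - exact: ltW (gam_gt0 _ _).
  - lra.
  apply: (powR_le _ _ ha); first exact: ltW.
  rewrite gamS; have := gam_gt0 R a; clear -ha2; lra.
have hDu : DD <= Mhat alpha Mt * r `^ alpha.
  case: (lerP r (gam R A)) => h; first by rewrite hD1.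
  rewrite hD2 // ler_pM2l //; apply: (powR_le _ _ ha); [exact: ltW | exact: ltW].
have hSu : SS <= 40 `^ alpha * Mt * ((2 * r) `^ alpha / (1 - rho R alpha)).
  apply: le_trans (_ : \sum_(0 <= j < A) 40 `^ alpha * Mt * HH R alpha (2 * r) j <= _).
    apply: ler_sum_nat => j /andP[_ hj].
    by have /andP[] := drop_up _ _ _ _ _ _ ha hMt hA hU _ x hj hx.
  rewrite -mulr_sumr ler_pM2l ?mulr_gt0 ?powR_gt0 //.
  have q0 : 0 < 2 * r by rewrite mulr_gt0.
  have [_ H] := geo _ _ ha _ A 0 q0; rewrite add0n in H; exact: H.
have [rh0 rh1] := rho_props _ _ ha.
have e0 : 0 < 1 - rho R alpha by lra.
move: hMM; rewrite ler_pdivlMr // powRN -/(rho R alpha) => hMM.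
have E80 : 80 `^ alpha = 2 `^ alpha * 40 `^ alpha :> R by rewrite -powRM // -natrM.
rewrite E80 in hMM; rewrite powRM // in hSu; last exact: ltW.
have D0' : 0 < 5 `^ alpha - 3 `^ alpha :> R by rewrite subr_gt0 p35.
have EMh : Mhat alpha Mt = 40 `^ alpha * (5 `^ alpha - 3 `^ alpha)^-1 * Mt by [].
rewrite EMh in hDu.
set K := 40 `^ alpha in hMM hSu hDu *.
set t := 2 `^ alpha in hMM hSu.
set iD := (5 `^ alpha - 3 `^ alpha)^-1 in hMM hDu.
set ie := (1 - rho R alpha)^-1 in hMM.
set u := r `^ alpha in hSu hDu u0 *.
have t1 : 1 <= t by apply: p1le => //; lra.
have iD0 : 0 < iD by rewrite invr_gt0.
have ie1 : 1 <= ie by rewrite /ie invf_ge1 //; lra.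
have K0 : 0 < K by rewrite powR_gt0.
have hSu' : SS <= K * Mt * t * u * ie by move: hSu; rewrite /ie !mulrA.
refine (le_trans (lerD hDu hSu') _).
have HM : ie * (1 + iD) * (t * K) * Mt * u <= M * u by rewrite ler_pM2r.
refine (le_trans _ HM).
have -> : ie * (1 + iD) * (t * K) * Mt * u
        = K * iD * Mt * u * (ie * t) + K * Mt * t * u * ie by ring.
rewrite lerD2r; apply: ler_peMr; last exact: mulr_ege1.
by rewrite !mulr_ge0 // ltW.
Qed.

Theorem lemma5 (R : realType) (d n : nat) (alpha M Mt : R) (k : 'I_d -> nat) :
  (1 <= d)%N -> (1 <= n)%N ->
  0 < alpha -> 0 < M -> 0 < Mt ->
  (1 - 5 `^ (- alpha))^-1 * (1 + (5 `^ alpha - 3 `^ alpha)^-1) * 80 `^ alpha <= M / Mt ->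
  inU R (abar d n) k ->
  let a := abar d n in
  let y := yC alpha Mt k a in
  let xs := ctr R k a in
  [/\ in_cube xs,
      (forall x : 'rV[R]_d, in_cube x -> x != xs -> y x < y xs) &
      (forall x : 'rV[R]_d, in_cube x ->
         Mt * linf (xs - x) `^ alpha <= `|y xs - y x| <= M * linf (xs - x) `^ alpha)].
Proof.
move=> hd hn ha hM hMt hMM hU a y xs.
have hA : (0 < abar d n)%N by rewrite /abar addn2.
rewrite /y /xs /a.
have pos : forall x, x != ctr R k (abar d n) -> 0 < linf (ctr R k (abar d n) - x).
  move=> x hne; rewrite lt_neqAle linf_ge0 andbT; apply/eqP => h.
  by move/eqP: hne; apply; exact: (linf_eq0 _ _ _ _ (esym h)).
split.
- exact: cube_xs _ _ _ _ hA hU.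
- move=> x hx hne.
  have /andP[h1 _] := main_bounds _ _ _ _ _ _ _ x ha hMt hA hU hMM hx (pos x hne).
  rewrite -subr_gt0; apply: lt_le_trans h1; rewrite mulr_gt0 // powR_gt0 //.
  exact: pos.
- move=> x hx.
  case: (eqVneq x (ctr R k (abar d n))) => [->|hne].
    by rewrite !subrr linf0 powR0 ?gt_eqF // !mulr0 normr0 lexx.
  have /andP[h1 h2] := main_bounds _ _ _ _ _ _ _ x ha hMt hA hU hMM hx (pos x hne).
  rewrite ger0_norm; first by rewrite h1 h2.
  apply: le_trans h1; rewrite mulr_ge0 ?powR_ge0 // ltW //.
Qed.
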